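(* Let $\{X(s)\}_{s\ge 0}$ be a centered Gaussian process with continuous sample paths whose covariance kernel $R$ satisfies $R(cs,ct)=c^{2\rho}R(s,t)$ for some $\rho>0$ and all $c>0$, $s,t>0$. Let $h(x)=x^{-\rho}R(1,x)$ for $x\ge 1$. Fix $\alpha>1$, let $t_n=\alpha^n$, and set \[ \gamma_{k,l}=\mathrm{Cov}\big(X(t_{k+1})-X(t_k),\,X(t_{l+1})-X(t_l)\big),\qquad \gamma_k=\gamma_{k,k}. \] For integers $j\ge 0$ define $L_j(\alpha)=h(\alpha^j)-\alpha^{-\rho}\{h(\alpha^{j+1})+h(\alpha^{|j-1|})\}+\alpha^{-2\rho}h(\alpha^j)$. Then, whenever $\gamma_k,\gamma_l>0$, \[ \delta_{k,l}:=\frac{\gamma_{k,l}}{\gamma_k^{1/2}\gamma_l^{1/2}}=\frac{L_{|k-l|}(\alpha)}{L_0(\alpha)}. \] *)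

(* Defs.v *)
From HB Require Import structures.
From mathcomp Require Import all_boot all_order all_algebra.
From mathcomp Require Import all_classical all_reals all_analysis.
Set Implicit Arguments. Unset Strict Implicit. Unset Printing Implicit Defensive.
Import Order.TTheory GRing.Theory Num.Theory.
Import numFieldNormedType.Exports.
Local Open Scope classical_set_scope.
Local Open Scope ring_scope.

Section defs.
Context {d : measure_display} {T : measurableType d} {R : realType}.

Definition gaussian_rv (P : probability T R) (Y : T -> R) : Prop :=
  measurable_fun setT Y /\
  ((exists m : R, P (Y @^-1` [set m]) = 1%E) \/
   (exists m s : R, 0 < s /\
      forall A : set R, measurable A -> P (Y @^-1` A) = normal_prob m s A)).

Definition gaussian_process (P : probability T R) (X : R -> T -> R) : Prop :=
  forall (n : nat) (c : 'I_n -> R) (s : 'I_n -> R),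
    (forall i, 0 <= s i) ->
    gaussian_rv P (fun w => \sum_(i < n) c i * X (s i) w).

Definition centered_process (P : probability T R) (X : R -> T -> R) : Prop :=
  forall s : R, 0 <= s -> ('E_P[X s] = 0)%E.

Definition continuous_paths (X : R -> T -> R) : Prop :=
  forall w : T, {within [set x : R | 0 <= x], continuous (fun s => X s w)}.

Definition is_cov_kernel (P : probability T R) (X : R -> T -> R)
    (Rk : R -> R -> R) : Prop :=
  forall s t : R, 0 <= s -> 0 <= t -> covariance P (X s) (X t) = (Rk s t)%:E.

(* gamma_{k,l} = Cov(X(t_{k+1}) - X(t_k), X(t_{l+1}) - X(t_l)), t_n = alpha^n
   (real-valued: the covariance is finite since X(s) is square integrable) *)
Definition gamma_kl (P : probability T R) (X : R -> T -> R) (alpha : R)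
    (k l : nat) : R :=
  fine (covariance P (fun w => X (alpha ^+ k.+1) w - X (alpha ^+ k) w)
                     (fun w => X (alpha ^+ l.+1) w - X (alpha ^+ l) w)).

End defs.

Definition hfun {R : realType} (Rk : R -> R -> R) (rho x : R) : R :=
  x `^ (- rho) * Rk 1 x.

Definition Lfun_j {R : realType} (Rk : R -> R -> R) (rho alpha : R) (j : nat) : R :=
  hfun Rk rho (alpha ^+ j)
  - alpha `^ (- rho) * (hfun Rk rho (alpha ^+ j.+1)
                        + hfun Rk rho (alpha ^+ `|(j%:Z - 1)%R|%N))
  + alpha `^ (- (2 * rho)) * hfun Rk rho (alpha ^+ j).

(* Main.v *)
Require Import Defs.
From HB Require Import structures.
From mathcomp Require Import all_boot all_order all_algebra.
From mathcomp Require Import all_classical all_reals all_analysis.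
From mathcomp Require Import ring lra zify.
Import Order.TTheory GRing.Theory Num.Theory.
Import numFieldNormedType.Exports.
Local Open Scope classical_set_scope.
Local Open Scope ring_scope.

Theorem lemma4p5 (d : measure_display) (T : measurableType d) (R : realType)
  (P : probability T R) (X : R -> T -> R) (Rk : R -> R -> R) (rho alpha : R)
  (HG : gaussian_process P X)
  (HL2 : forall s : R, 0 <= s -> X s \in Lfun P 2%:E)
  (Hcent : centered_process P X)
  (Hcont : continuous_paths X)
  (Hcov : is_cov_kernel P X Rk)
  (Hrho : 0 < rho)
  (Hscale : forall c s t : R, 0 < c -> 0 < s -> 0 < t ->
              Rk (c * s) (c * t) = c `^ (2 * rho) * Rk s t)
  (Halpha : 1 < alpha)
  (k l : nat)
  (Hk : 0 < gamma_kl P X alpha k k) (Hl : 0 < gamma_kl P X alpha l l) :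
  gamma_kl P X alpha k l
    / (Num.sqrt (gamma_kl P X alpha k k) * Num.sqrt (gamma_kl P X alpha l l))
  = Lfun_j Rk rho alpha `|(k%:Z - l%:Z)%R|%N / Lfun_j Rk rho alpha 0.
Proof.
have a0 : 0 < alpha by apply: lt_trans Halpha.
have an0 n : 0 < alpha ^+ n by apply: exprn_gt0.
have an0' n : 0 <= alpha ^+ n by apply: ltW.
set q := alpha `^ rho.
have q0 : 0 < q by apply: powR_gt0.
have pw n : (alpha ^+ n) `^ rho = q ^+ n.
  by rewrite -powR_mulrn ?(ltW a0)// -powRrM mulrC powRrM powR_mulrn ?ltW.
have Hg a b : gamma_kl P X alpha a b =
   Rk (alpha ^+ a.+1) (alpha ^+ b.+1) - Rk (alpha ^+ a.+1) (alpha ^+ b)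
   - Rk (alpha ^+ a) (alpha ^+ b.+1) + Rk (alpha ^+ a) (alpha ^+ b).
  rewrite /gamma_kl.
  have e s t : (fun w => X s w - X t w) = (X s \- X t)%R by [].
  have L2 n : X (alpha ^+ n) \in Lfun P 2%:E := HL2 _ (an0' n).
  have L2B m n : (X (alpha ^+ m) \- X (alpha ^+ n))%R \in Lfun P 2%:E.
    by rewrite rpredB // lee1n.
  rewrite (e (alpha ^+ a.+1)) (e (alpha ^+ b.+1)) covarianceBl // !covarianceBr // !Hcov //.
  rewrite -!EFinB /=; ring.
have Hsym s t : 0 <= s -> 0 <= t -> Rk s t = Rk t s.
  move=> s0 t0; apply: EFin_inj; rewrite -Hcov // -Hcov //; exact: covarianceC.
have Hgs a b : gamma_kl P X alpha a b = gamma_kl P X alpha b a.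
  by rewrite /gamma_kl covarianceC.
set H := fun n => Rk 1 (alpha ^+ n).
have HR a n : Rk (alpha ^+ a) (alpha ^+ (a + n)) = (q ^+ a) ^+ 2 * H n.
  have := Hscale (alpha ^+ a) 1 (alpha ^+ n) (an0 a) ltr01 (an0 n).
  rewrite mulr1 -exprD => ->; congr (_ * _).
  by rewrite mulrC powRrM pw -[2]/(2%:R) powR_mulrn // exprn_ge0 // ltW.
have hf n : hfun Rk rho (alpha ^+ n) = (q ^+ n)^-1 * H n.
  by rewrite /hfun powRN pw.
have qn : q != 0 by rewrite gt_eqF.
have HR2 a b : (a <= b)%N -> Rk (alpha ^+ a) (alpha ^+ b) = (q ^+ a) ^+ 2 * H (b - a)%N.
  by move=> ab; rewrite -HR subnKC.
have qa : alpha `^ (- rho) = q^-1 by rewrite powRN.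
have q2 : alpha `^ (- (2 * rho)) = (q ^+ 2)^-1.
  by rewrite powRN mulrC powRrM -[2]/(2%:R) powR_mulrn // ltW.
have Lz : Lfun_j Rk rho alpha 0 = H 0 - q^-1 * (q^-1 * H 1 + q^-1 * H 1) + (q ^+ 2)^-1 * H 0.
  rewrite /Lfun_j qa q2 !hf /=; rewrite expr0 invr1 mul1r expr1; done.
have LS j : Lfun_j Rk rho alpha j.+1 = q^-j.+1 * H j.+1 - q^-1 * (q^-j.+2 * H j.+2 + q^-j * H j) + (q ^+ 2)^-1 * (q^-j.+1 * H j.+1).
  have ej : (j.+1%:Z - 1 = j%:Z)%R by rewrite -addn1 PoszD addrK.
  by rewrite /Lfun_j qa q2 !hf ej.
have Gj k0 j : gamma_kl P X alpha k0 (k0 + j) = (q ^+ k0) ^+ 2 * q ^+ j * q ^+ 2 * Lfun_j Rk rho alpha j.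
  rewrite Hg; case: j => [|j].
  - rewrite addn0 (Hsym (alpha ^+ k0.+1) (alpha ^+ k0)) // !HR2 ?leqnSn ?leqnn // Lz.
    rewrite !subnn subSnn !exprS !expr0; field; exact: qn.
  - rewrite !HR2; try lia.
    have -> : ((k0 + j.+1).+1 - k0.+1 = j.+1)%N by lia.
    have -> : ((k0 + j.+1) - k0.+1 = j)%N by lia.
    have -> : ((k0 + j.+1).+1 - k0 = j.+2)%N by lia.
    have -> : ((k0 + j.+1) - k0 = j.+1)%N by lia.
    rewrite LS !exprS; field; by rewrite expf_neq0 qn.
wlog kl : k l Hk Hl / (k <= l)%N.
  move=> W; case: (leqP k l) => [kl|lk]; first exact: W.
  rewrite (Hgs k l) [X in _ / X]mulrC distnC; exact: W l k Hl Hk (ltnW lk).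
move: Hl; rewrite -(subnKC kl); move: (l - k)%N => j Hl.
have ej : `|(k%:Z - (k + j)%:Z)%R|%N = j.
  by rewrite PoszD opprD addrA subrr add0r abszN.
rewrite ej Gj.
have G0 := Gj k 0; rewrite addn0 in G0.
have G1 := Gj (k + j)%N 0; rewrite addn0 in G1.
rewrite G0 G1; rewrite G0 in Hk.
set LL0 := Lfun_j Rk rho alpha 0.
have L0p : 0 < LL0.
  by move: Hk; rewrite pmulr_rgt0 // !mulr_gt0 // exprn_gt0.
have sq m : Num.sqrt ((q ^+ m) ^+ 2 * q ^+ 0 * q ^+ 2 * LL0) = q ^+ m * q * Num.sqrt LL0.
  rewrite expr0 mulr1 -exprMn sqrtrM ?sqr_ge0 // sqrtr_sqr ger0_norm //.
  by rewrite mulr_ge0 // ?exprn_ge0 // ltW.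
rewrite !sq.
set s := Num.sqrt LL0.
have s0 : 0 < s by rewrite sqrtr_gt0.
have s2 : LL0 = s * s by rewrite -expr2 sqr_sqrtr // ltW.
rewrite s2 exprD; field.
by rewrite gt_eqF // qn !expf_neq0.
Qed.
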